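(* For every $k\ge 2$, every $k$-partite $k$-graph $F$ belongs to $\mathbf{COVER}_k^{\cdot,k-1}$.
   Context: A $k$-graph $H$ has edge set $E(H)\subseteq\binom{V(H)}{k}$; $\delta_{k-1}(H)$ is the minimum over $(k-1)$-subsets $S$ of the number of edges containing $S$. A $k$-graph $F$ is $k$-partite if $V(F)$ can be partitioned into $k$ classes such that every edge meets each class in exactly one vertex. An $(n,p,\mu,\cdot)$ $k$-graph is a $k$-graph $H$ on a vertex set $V$ with $|V|=n$ such that for all $X_1,\dots,X_k\subseteq V$, the number of $k$-tuples $(x_1,\dots,x_k)\in X_1\times\cdots\times X_k$ with $\{x_1,\dots,x_k\}\in E(H)$ is at least $p|X_1|\cdots|X_k|-\mu n^k$. $\mathbf{COVER}_k^{\cdot,k-1}$ is the class of $k$-graphs $F$ such that for all $0<p,\alpha<1$ there exist $n_0$ and $\mu>0$ such that in every $(n,p,\mu,\cdot)$ $k$-graph $H$ with $\delta_{k-1}(H)\ge\alpha n$ and $n\ge n_0$ every vertex lies in a copy of $F$. *)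

(* Defs.v *)
From HB Require Import structures.
From mathcomp Require Import all_boot all_order all_algebra.
From mathcomp Require Import reals.
Set Implicit Arguments. Unset Strict Implicit. Unset Printing Implicit Defensive.
Import Order.TTheory GRing.Theory Num.Theory.
Local Open Scope ring_scope.

Definition is_kgraph (k : nat) (V : finType) (E : {set {set V}}) : Prop :=
  forall e, e \in E -> #|e| = k.

Definition kpartite (k : nat) (V : finType) (E : {set {set V}}) : Prop :=
  exists c : V -> 'I_k,
    (forall i : 'I_k, exists v, c v = i) /\
    (forall e, e \in E -> forall i : 'I_k, #|[set v in e | c v == i]| = 1%N).

Definition codeg_ge (R : realType) (k : nat) (V : finType) (E : {set {set V}})
    (alpha : R) : Prop :=
  forall S : {set V}, #|S| = k.-1 ->
    alpha * (#|V|%:R) <= (#|[set e in E | S \subset e]|)%:R.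

Definition pmu_dense (R : realType) (k : nat) (V : finType) (E : {set {set V}})
    (p mu : R) : Prop :=
  forall X : 'I_k -> {set V},
    p * (\prod_(i < k) (#|X i|%:R : R)) - mu * (#|V|%:R) ^+ k <=
    (#|[set x : {ffun 'I_k -> V} |
         [forall i, x i \in X i] && ([set x i | i : 'I_k] \in E)]|)%:R.

Definition in_copy (W V : finType) (EF : {set {set W}}) (EH : {set {set V}})
    (v : V) : Prop :=
  exists f : W -> V,
    [/\ injective f, (forall e, e \in EF -> f @: e \in EH) & v \in codom f].

Definition in_COVER (R : realType) (k : nat) (W : finType)
    (EF : {set {set W}}) : Prop :=
  forall p alpha : R, 0 < p < 1 -> 0 < alpha < 1 ->
  exists n0 : nat, exists2 mu : R, 0 < mu &
    forall (V : finType) (EH : {set {set V}}),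
      is_kgraph k EH -> pmu_dense k EH p mu -> codeg_ge k EH alpha ->
      (n0 <= #|V|)%N ->
      forall v : V, in_copy EF EH v.

(* Main.v *)
Require Import Defs.
From mathcomp Require Import all_boot all_order all_algebra.
From mathcomp Require Import reals.
From mathcomp Require Import all_fingroup zify ring.
Set Warnings "-notation-overridden,-ambiguous-paths".
Set Implicit Arguments. Unset Strict Implicit. Unset Printing Implicit Defensive.
Import Order.TTheory GRing.Theory Num.Theory.

Fixpoint allseqs (V : finType) (m : nat) : seq (seq V) :=
  if m is m'.+1 then [seq x :: s | x <- enum V, s <- allseqs V m'] else [:: [::]].

Lemma size_allseqs (V : finType) m : size (allseqs V m) = #|V| ^ m.
Proof. elim: m => [|m IH] //=; by rewrite size_allpairs IH -cardE expnS. Qed.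

Lemma mem_allseqs (V : finType) m s : s \in allseqs V m -> size s = m.
Proof.
elim: m s => [|m IH] s /=; first by rewrite inE => /eqP ->.
by case/allpairsP=> -[x s'] /= [_ Hs' ->] /=; rewrite (IH _ Hs').
Qed.

Lemma sum_allseqsS (V : finType) m (F : seq V -> nat) :
  \sum_(s <- allseqs V m.+1) F s = \sum_(x : V) \sum_(s <- allseqs V m) F (x :: s).
Proof. by rewrite /= big_allpairs_dep /= big_enum. Qed.

Lemma sum_prod_allseqs (V : finType) m (f : V -> nat) :
  \sum_(a <- allseqs V m) \prod_(x <- a) f x = (\sum_x f x) ^ m.
Proof.
elim: m => [|m IH]; first by rewrite /= big_seq1 big_nil.
rewrite sum_allseqsS expnS big_distrl /=; apply: eq_bigr => x _.
by under eq_bigr do rewrite big_cons; rewrite -big_distrr /= IH.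
Qed.

Lemma expn_mono (x y q : nat) : x <= y -> x ^ q <= y ^ q.
Proof. move=> h; elim: q => [|q IH] //; rewrite !expnS leq_mul //. Qed.

Lemma cheb_pt (x y q : nat) : x * y ^ q + y * x ^ q <= x * x ^ q + y * y ^ q.
Proof.
wlog le: x y / x <= y.
  move=> H; case: (leqP x y) => h; first exact: H.
  by rewrite addnC [X in _ <= X]addnC; apply: H; rewrite ltnW.
have := expn_mono q le; set X := x ^ q; set Y := y ^ q => h.
nia.
Qed.

Lemma sum_const_seq (I : Type) (r : seq I) (c : nat) : \sum_(a <- r) c = size r * c.
Proof. by rewrite -sum1_size big_distrl; apply: eq_bigr => ? _; rewrite /= mul1n. Qed.

Lemma cheb (I : Type) (r : seq I) (F : I -> nat) q :
  (\sum_(a <- r) F a) * (\sum_(a <- r) F a ^ q) <= size r * \sum_(a <- r) F a ^ q.+1.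
Proof.
rewrite -(leq_pmul2l (isT : 0 < 2)).
have E1 : 2 * (size r * \sum_(a <- r) F a ^ q.+1) =
   \sum_(a <- r) \sum_(b <- r) (F a * F a ^ q + F b * F b ^ q).
  rewrite mul2n -addnn; symmetry.
  under eq_bigr do rewrite big_split /= sum_const_seq.
  rewrite big_split /= -big_distrr /= exchange_big /=.
  under [X in _ + X = _]eq_bigr do rewrite sum_const_seq.
  rewrite -big_distrr /=; congr (_ + _); congr (_ * _); apply: eq_bigr => a _; by rewrite expnS.
have E2 : 2 * ((\sum_(a <- r) F a) * (\sum_(a <- r) F a ^ q)) =
   \sum_(a <- r) \sum_(b <- r) (F a * F b ^ q + F b * F a ^ q).
  rewrite mul2n -addnn; symmetry.
  under eq_bigr do rewrite big_split /=.
  rewrite big_split /=; congr (_ + _).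
    by rewrite big_distrl; apply: eq_bigr => a _; rewrite big_distrr.
  by rewrite big_distrr; apply: eq_bigr => a _ /=; rewrite big_distrl.
rewrite E1 E2; apply: leq_sum => a _; apply: leq_sum => b _; exact: cheb_pt.
Qed.

Lemma power_mean (I : Type) (r : seq I) (F : I -> nat) q :
  (\sum_(a <- r) F a) ^ q * size r <= size r ^ q * \sum_(a <- r) F a ^ q.
Proof.
elim: q => [|q IH]; first by rewrite !expn0 !mul1n; under eq_bigr do rewrite expn0; rewrite sum1_size.
rewrite expnS -mulnA (leq_trans (leq_mul (leqnn _) IH)) //.
by rewrite mulnCA expnS [size r * _]mulnC -mulnA leq_mul // cheb.
Qed.

Definition Wa (V : finType) (W : seq V -> nat) (a : seq V) : seq V -> nat :=
  fun s => \prod_(x <- a) W (x :: s).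

Fixpoint homP (V : finType) (t j : nat) (W : seq V -> nat) : nat :=
  if j is j'.+1 then \sum_(a <- allseqs V t) homP t j' (Wa W a) else W [::].

Lemma sido (V : finType) (t j : nat) (W : seq V -> nat) : 0 < #|V| ->
  (\sum_(s <- allseqs V j) W s) ^ (t ^ j) * #|V| ^ (j * t)
    <= #|V| ^ (j * t ^ j) * homP t j W.
Proof.
move=> n0; set n := #|V|.
elim: j W => [|j IH] W; first by rewrite /= big_seq1 !expn0 !mul1n muln1 expn1.
set m := t ^ j.
set Z := \sum_(s <- allseqs V j.+1) W s.
set A := \sum_(a <- allseqs V t) \sum_(s <- allseqs V j) Wa W a s.
set Q := \sum_(a <- allseqs V t) (\sum_(s <- allseqs V j) Wa W a s) ^ m.
set h := homP t j.+1 W.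
have h1 : Z ^ t * n ^ j <= n ^ (j * t) * A.
  have := power_mean (allseqs V j) (fun s => \sum_x W (x :: s)) t.
  rewrite size_allseqs -expnM.
  have -> : \sum_(a <- allseqs V j) \sum_x W (x :: a) = Z.
    by rewrite /Z sum_allseqsS exchange_big.
  have -> : \sum_(a <- allseqs V j) (\sum_x W (x :: a)) ^ t = A; last by [].
  rewrite /A exchange_big /=; apply: eq_bigr => s _.
  by rewrite -sum_prod_allseqs.
have h2 : A ^ m * n ^ t <= n ^ (t * m) * Q.
  by have := power_mean (allseqs V t) (fun a => \sum_(s <- allseqs V j) Wa W a s) m;
     rewrite size_allseqs -expnM.
have h3 : Q * n ^ (j * t) <= n ^ (j * m) * h.
  rewrite /Q /h /= big_distrl big_distrr /=; apply: leq_sum => a _; exact: IH.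
have h1' : Z ^ (t * m) * n ^ (j * m) <= n ^ (j * t * m) * A ^ m.
  by rewrite (expnM Z) (expnM n j) [n ^ (j * t * m)]expnM -!expnMn; apply: expn_mono.
have npos e : 0 < n ^ e by rewrite expn_gt0 n0.
rewrite -(leq_pmul2l (npos (j * m))).
have -> : t ^ j.+1 = t * m by rewrite expnS.
have -> : n ^ (j * m) * (Z ^ (t * m) * n ^ (j.+1 * t))
   = (Z ^ (t * m) * n ^ (j * m)) * n ^ t * n ^ (j * t).
  by rewrite mulSn expnD; ring.
have -> : n ^ (j * m) * (n ^ (j.+1 * (t * m)) * h)
   = n ^ (j * t * m) * n ^ (t * m) * (n ^ (j * m) * h).
  by rewrite !mulSn !expnD (mulnA j t m); ring.
apply: (leq_trans (leq_mul (leq_mul h1' (leqnn _)) (leqnn _))).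
rewrite -!mulnA leq_mul // mulnA (leq_trans (leq_mul h2 (leqnn _))) //.
by rewrite -mulnA leq_mul.
Qed.

Lemma bad_count (V : finType) m (B : seq V) : uniq B ->
  (\sum_(s <- allseqs V m) (~~ uniq (B ++ s) : nat)) * #|V|
    <= m * (size B + m) * #|V| ^ m.
Proof.
elim: m B => [|m IH] B uB; first by rewrite /= big_seq1 cats0 uB.
set n := #|V|.
rewrite sum_allseqsS big_distrl /=.
have step x : (\sum_(s <- allseqs V m) (~~ uniq (B ++ x :: s) : nat)) * n
   <= (x \in B) * n ^ m.+1 + m * (size B + m).+1 * n ^ m.
  case xB: (x \in B) => /=.
    rewrite mul1n expnSr (leq_trans _ (leq_addr _ _)) // leq_mul2r.
    apply/orP; right; rewrite -(size_allseqs V m) -sum1_size.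
    by apply: leq_sum => s _; case: (~~ _).
  rewrite mul0n add0n.
  have := IH (rcons B x); rewrite rcons_uniq xB uB size_rcons => /(_ isT).
  by under [X in X * _ <= _ -> _]eq_bigr do rewrite cat_rcons; rewrite addSn.
apply: leq_trans; first by apply: leq_sum => x _; exact: step.
rewrite big_split /=.
rewrite -big_distrl /= sum_nat_const cardT -cardE -/n.
have cB : \sum_(x : V) (x \in B : nat) <= size B.
  rewrite (leq_trans _ (card_size B)) // -sum1_card big_mkcond /=.
  by rewrite [X in _ <= X]big_mkcond /=; apply: leq_sum => x _; case: (x \in B).
rewrite -/n (leq_trans (leq_add (leq_mul cB (leqnn _)) (leqnn _))) //.
rewrite expnS; set b := size B; set N := n ^ m. nia.
Qed.

Fixpoint homPB (V : finType) (t j : nat) (B : seq V) (W : seq V -> nat) : nat :=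
  if j is j'.+1 then
    \sum_(a <- allseqs V t | uniq (B ++ a)) homPB t j' (B ++ a) (Wa W a)
  else W [::].

Fixpoint Kf (t j b : nat) : nat :=
  if j is j'.+1 then Kf t j' (b + t) + t * (b + t) else 0.

Lemma Wa_le1 (V : finType) (W : seq V -> nat) a :
  (forall s, W s <= 1) -> forall s, Wa W a s <= 1.
Proof.
move=> H s; rewrite /Wa; elim: a => [|x a IH]; first by rewrite big_nil.
by rewrite big_cons (leq_trans (leq_mul (H _) IH)).
Qed.

Lemma homP_le (V : finType) t j (W : seq V -> nat) :
  (forall s, W s <= 1) -> homP t j W <= #|V| ^ (j * t).
Proof.
elim: j W => [|j IH] W H /=; first by rewrite H.
rewrite mulSn expnD -(size_allseqs V t) -sum_const_seq.
by apply: leq_sum => a _; apply: IH; apply: Wa_le1.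
Qed.

Lemma compare (V : finType) t j (B : seq V) (W : seq V -> nat) :
  uniq B -> (forall s, W s <= 1) ->
  homP t j W * #|V| <= homPB t j B W * #|V| + Kf t j (size B) * #|V| ^ (j * t).
Proof.
elim: j B W => [|j IH] B W uB H; first by rewrite /= addn0.
set n := #|V|.
rewrite /= big_distrl (bigID (fun a => uniq (B ++ a))) /=.
have e1 : \sum_(a <- allseqs V t | uniq (B ++ a)) homP t j (Wa W a) * n
   <= (\sum_(a <- allseqs V t | uniq (B ++ a)) homPB t j (B ++ a) (Wa W a)) * n
      + n ^ t * (Kf t j (size B + t) * n ^ (j * t)).
  rewrite big_distrl /= -(size_allseqs V t) -sum_const_seq.
  apply: (@leq_trans (\sum_(a <- allseqs V t | uniq (B ++ a))
     (homPB t j (B ++ a) (Wa W a) * n + Kf t j (size B + t) * n ^ (j * t)))).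
    rewrite big_seq_cond [X in _ <= X]big_seq_cond; apply: leq_sum => a /andP[Ha u].
    have := IH (B ++ a) (Wa W a) u (Wa_le1 a H); by rewrite size_cat (mem_allseqs Ha).
  rewrite big_split /= leq_add2l [X in _ <= X]big_mkcond /= big_mkcond /=.
  by apply: leq_sum => a _; case: (uniq _).
have e2 : \sum_(a <- allseqs V t | ~~ uniq (B ++ a)) homP t j (Wa W a) * n
   <= t * (size B + t) * n ^ t * n ^ (j * t).
  apply: (@leq_trans ((\sum_(a <- allseqs V t) (~~ uniq (B ++ a) : nat)) * n * n ^ (j * t))).
    rewrite -!big_distrl /= big_mkcond /= mulnAC leq_mul // big_distrl /=.
    apply: leq_sum => a _; case: (uniq (B ++ a)) => //=; rewrite mul1n.
    exact: homP_le (Wa_le1 a H).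
  by rewrite leq_mul // bad_count.
rewrite (leq_trans (leq_add e1 e2)) // -addnA leq_add2l.
rewrite mulSn expnD; set X := n ^ t; set Y := n ^ (j * t); nia.
Qed.

Lemma sum_gt0_ex (I : eqType) (r : seq I) (P : pred I) (F : I -> nat) :
  0 < \sum_(a <- r | P a) F a -> exists a, [/\ a \in r, P a & 0 < F a].
Proof.
elim: r => [|x r IH]; first by rewrite big_nil.
rewrite big_cons; case Px: (P x).
  case: (posnP (F x)) => Fx.
    by rewrite Fx add0n => /IH [a [ar Pa Fa]]; exists a; rewrite inE ar orbT.
  by move=> _; exists x; rewrite inE eqxx.
by move=> /IH [a [ar Pa Fa]]; exists a; rewrite inE ar orbT.
Qed.

Lemma prod_gt0_all (I : eqType) (r : seq I) (F : I -> nat) :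
  0 < \prod_(a <- r) F a -> forall a, a \in r -> 0 < F a.
Proof.
elim: r => [|x r IH] //; rewrite big_cons muln_gt0 => /andP[Fx Fr] a.
by rewrite inE => /orP[/eqP -> //|]; apply: IH.
Qed.

Fixpoint okW (V : finType) (W : seq V -> nat) (ps : seq (seq V)) : bool :=
  if ps is a :: ps' then okW (Wa W a) ps' else 0 < W [::].

Lemma extract (V : finType) t j (B : seq V) (W : seq V -> nat) :
  uniq B -> 0 < homPB t j B W ->
  exists ps : seq (seq V), [/\ size ps = j, all (fun a => size a == t) ps,
     uniq (B ++ flatten ps) & okW W ps].
Proof.
elim: j B W => [|j IH] B W uB /=.
  by move=> HW; exists [::]; rewrite cats0 uB.
move=> /sum_gt0_ex [a [Ha u Hp]].
have [ps [s1 s2 s3 s4]] := IH _ _ u Hp.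
exists (a :: ps); rewrite /= s1 s2 (mem_allseqs Ha) eqxx catA s3 s4; split=> //.
Qed.

Fixpoint transv (V : finType) (xs : seq V) (ps : seq (seq V)) : bool :=
  match xs, ps with
  | [::], [::] => true
  | x :: xs', a :: ps' => (x \in a) && transv xs' ps'
  | _, _ => false
  end.

Lemma okW_transv (V : finType) (ps : seq (seq V)) (W : seq V -> nat) xs :
  okW W ps -> transv xs ps -> 0 < W xs.
Proof.
elim: ps W xs => [|a ps IH] W [|x xs] //= H /andP[xa T].
by have := IH _ _ H T; rewrite /Wa => /prod_gt0_all; apply.
Qed.

Lemma transv_nth (V : finType) (x0 : V) (xs : seq V) (ps : seq (seq V)) :
  size xs = size ps ->
  (forall i, i < size ps -> nth x0 xs i \in nth [::] ps i) -> transv xs ps.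
Proof.
elim: ps xs => [|a ps IH] [|x xs] //= [sz] H.
rewrite (H 0 isT) IH // => i Hi; exact: (H i.+1).
Qed.

Lemma mem_flatten_nth (V : eqType) (P : seq (seq V)) i x :
  i < size P -> x \in nth [::] P i -> x \in flatten P.
Proof. by move=> Hi xP; apply/flattenP; exists (nth [::] P i) => //; apply: mem_nth. Qed.

Lemma flatten_rows (V : eqType) (P : seq (seq V)) i i' x :
  uniq (flatten P) -> i < size P -> i' < size P ->
  x \in nth [::] P i -> x \in nth [::] P i' -> i = i'.
Proof.
elim: P i i' => [|a P IH] [|i] [|i'] //=; rewrite cat_uniq => /and3P[ua hn uP].
- move=> _ Hi' xa xP.
  by move/hasPn: hn => /(_ x (mem_flatten_nth Hi' xP)); rewrite xa.
- move=> Hi _ xP xa.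
  by move/hasPn: hn => /(_ x (mem_flatten_nth Hi xP)); rewrite xa.
- by move=> Hi Hi' x1 x2; rewrite (IH i i' uP Hi Hi' x1 x2).
Qed.

Lemma uniq_row (V : eqType) (P : seq (seq V)) i :
  uniq (flatten P) -> uniq (nth [::] P i).
Proof.
elim: P i => [|a P IH] [|i] //=; rewrite cat_uniq => /and3P[ua _ uP] //; exact: IH.
Qed.

Lemma build (W V : finType) (j : nat) (EF : {set {set W}}) (EH : {set {set V}})
  (c : W -> 'I_j.+1) (w0 : W) (v : V) (P : seq (seq V)) :
  (forall e, e \in EF -> forall i : 'I_j.+1, #|[set u in e | c u == i]| = 1%N) ->
  c w0 = ord0 -> size P = j.+1 -> all (fun a => size a == #|W|) P ->
  uniq (flatten P) -> nth v (nth [::] P 0) 0 = v ->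
  (forall xs, transv xs P -> [set y in xs] \in EH) ->
  in_copy EF EH v.
Proof.
move=> Hc cw0 sP aP uP hv Htr.
have pos : 0 < #|W| by apply/card_gt0P; exists w0.
pose o0 : 'I_#|W| := Ordinal pos.
pose r (w : W) : 'I_#|W| := tperm (enum_rank w0) o0 (enum_rank w).
have rinj : injective r by move=> a b /perm_inj /enum_rank_inj.
have szrow i : i < j.+1 -> size (nth [::] P i) = #|W|.
  by move=> Hi; apply/eqP; apply: (allP aP); apply: mem_nth; rewrite sP.
pose f w := nth v (nth [::] P (c w)) (r w).
have fmem w : f w \in nth [::] P (c w) by apply: mem_nth; rewrite szrow.
exists f; split.
- move=> w1 w2 E.
  have ci : c w1 = c w2.
    apply: val_inj; apply: (flatten_rows (x := f w1) uP);
      [by rewrite sP ltn_ord|by rewrite sP ltn_ord|exact: fmem|by rewrite E; exact: fmem].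
  move: E; rewrite /f ci => /eqP; rewrite nth_uniq ?szrow ?(uniq_row _ uP) //.
  by move=> /eqP/val_inj/rinj.
- move=> e eE.
  have wiP i : {w | w \in e & c w = i}.
    case: (pickP [pred u in [set u in e | c u == i]]) => [u|] /=.
      by rewrite inE => /andP[ue /eqP cu]; exists u.
    move=> H0; exfalso; have := Hc e eE i.
    by rewrite (eq_card0 H0).
  pose wi i := sval (wiP i).
  have wie i : wi i \in e by rewrite /wi; case: (wiP i).
  have wic i : c (wi i) = i by rewrite /wi; case: (wiP i).
  have wiu u : u \in e -> wi (c u) = u.
    move=> ue; have /cards1P [w Hw] : #|[set u0 in e | c u0 == c u]| == 1%N by rewrite Hc.
    have h1 : u \in [set u0 in e | c u0 == c u] by rewrite inE ue eqxx.
    have h2 : wi (c u) \in [set u0 in e | c u0 == c u] by rewrite inE wie wic eqxx.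
    by move: h1 h2; rewrite Hw !inE => /eqP -> /eqP ->.
  pose xs := [seq f (wi (inord i)) | i <- iota 0 j.+1].
  have Tx : transv xs P.
    apply: (transv_nth (x0 := v)); first by rewrite size_map size_iota sP.
    move=> i; rewrite sP => Hi; rewrite (nth_map 0) ?size_iota // nth_iota // add0n.
    by have := fmem (wi (inord i)); rewrite wic inordK.
  suff -> : f @: e = [set y in xs] by apply: Htr.
  apply/setP => y; rewrite inE; apply/imsetP/mapP.
    move=> [u ue ->]; exists (nat_of_ord (c u)); first by rewrite mem_iota /=.
    by rewrite inord_val wiu.
  by move=> [i _ ->]; exists (wi (inord i)).
- have -> : v = f w0 by rewrite /f cw0 /r tpermL.
  exact: codom_f.
Qed.

Definition ee (V : finType) (EH : {set {set V}}) (s : seq V) : nat :=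
  [set y in s] \in EH.

Lemma ee_le1 (V : finType) (EH : {set {set V}}) s : ee EH s <= 1.
Proof. by rewrite /ee; case: (_ \in _). Qed.

Lemma codeg_nat (V : finType) (EH : {set {set V}}) j (s : seq V) :
  is_kgraph j.+1 EH -> uniq s -> size s = j ->
  #|[set e in EH | [set y in s] \subset e]| <= \sum_x ee EH (x :: s).
Proof.
move=> Hk us ss; set S := [set y in s].
have -> : \sum_x ee EH (x :: s) = #|[set x | x |: S \in EH]|.
  rewrite -sum1_card [in RHS]big_mkcond /=; apply: eq_bigr => x _; rewrite inE /ee.
  have -> : [set y in x :: s] = x |: S by apply/setP => y; rewrite !inE.
  by case: (_ \in _).
apply: (leq_trans _ (leq_imset_card (fun x => x |: S) _)).
apply: subset_leq_card; apply/subsetP => e0; rewrite inE => /andP[eH Se].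
have cS : #|S| = size s by rewrite cardsE; apply/card_uniqP.
have ce : #|e0| = j.+1 by apply: Hk.
have : 0 < #|e0 :\: S| by rewrite cardsD (setIidPr Se) ce cS ss subSnn.
move=> /card_gt0P [x]; rewrite inE => /andP[xS xe].
have Ee : e0 = x |: S.
  apply/eqP; rewrite eq_sym eqEcard subUset sub1set xe Se /= cardsU1 xS ce cS ss.
  by [].
by rewrite Ee; apply: imset_f; rewrite inE -Ee eH.
Qed.

Lemma N1lem (V : finType) (EH : {set {set V}}) (v : V) t' j : 0 < #|V| ->
  (\sum_(U <- allseqs V t') \sum_(s <- allseqs V j) Wa (ee EH) (v :: U) s) ^ (t'.+1 ^ j)
     * #|V| ^ t' * #|V| ^ (j * t'.+1)
  <= #|V| ^ (t' * t'.+1 ^ j) * #|V| ^ (j * t'.+1 ^ j)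
     * \sum_(U <- allseqs V t') homP t'.+1 j (Wa (ee EH) (v :: U)).
Proof.
move=> n0.
have h1 := power_mean (allseqs V t')
   (fun U => \sum_(s <- allseqs V j) Wa (ee EH) (v :: U) s) (t'.+1 ^ j).
rewrite size_allseqs -expnM in h1.
have h2 : (\sum_(U <- allseqs V t') (\sum_(s <- allseqs V j) Wa (ee EH) (v :: U) s) ^ (t'.+1 ^ j))
     * #|V| ^ (j * t'.+1)
   <= #|V| ^ (j * t'.+1 ^ j) * \sum_(U <- allseqs V t') homP t'.+1 j (Wa (ee EH) (v :: U)).
  rewrite big_distrl big_distrr /=; apply: leq_sum => U _; exact: sido.
rewrite (leq_trans (leq_mul h1 (leqnn _))) // -!mulnA leq_mul //.
Qed.

Lemma N2lem (V : finType) (EH : {set {set V}}) (v : V) t' j :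
  (\sum_(U <- allseqs V t') homP t'.+1 j (Wa (ee EH) (v :: U))) * #|V|
  <= (\sum_(U <- allseqs V t' | uniq (v :: U)) homPB t'.+1 j (v :: U) (Wa (ee EH) (v :: U))) * #|V|
     + (Kf t'.+1 j t'.+1 + t' * (1 + t')) * #|V| ^ (t' + j * t'.+1).
Proof.
set n := #|V|; set W := fun U => Wa (ee EH) (v :: U).
rewrite big_distrl (bigID (fun U => uniq (v :: U))) /=.
have e1 : \sum_(U <- allseqs V t' | uniq (v :: U)) homP t'.+1 j (W U) * n
   <= (\sum_(U <- allseqs V t' | uniq (v :: U)) homPB t'.+1 j (v :: U) (W U)) * n
      + n ^ t' * (Kf t'.+1 j t'.+1 * n ^ (j * t'.+1)).
  rewrite big_distrl /= -(size_allseqs V t') -sum_const_seq.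
  apply: (@leq_trans (\sum_(U <- allseqs V t' | uniq (v :: U))
     (homPB t'.+1 j (v :: U) (W U) * n + Kf t'.+1 j t'.+1 * n ^ (j * t'.+1)))).
    rewrite big_seq_cond [X in _ <= X]big_seq_cond; apply: leq_sum => U /andP[HU u].
    have := @compare V t'.+1 j (v :: U) (W U) u (Wa_le1 (v :: U) (@ee_le1 V EH)).
    by rewrite /= (mem_allseqs HU).
  rewrite big_split /= leq_add2l [X in _ <= X]big_mkcond /= big_mkcond /=.
  by apply: leq_sum => a _; case: ifP.
have e2 : \sum_(U <- allseqs V t' | ~~ uniq (v :: U)) homP t'.+1 j (W U) * n
   <= t' * (1 + t') * n ^ t' * n ^ (j * t'.+1).
  apply: (@leq_trans ((\sum_(U <- allseqs V t') (~~ uniq ([:: v] ++ U) : nat)) * n * n ^ (j * t'.+1))).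
    rewrite -!big_distrl /= big_mkcond /= mulnAC leq_mul // big_distrl /=.
    apply: leq_sum => U _; case: ifP => // _.
    by rewrite mul1n; exact: homP_le (Wa_le1 (v :: U) (@ee_le1 V EH)).
  by rewrite leq_mul // (bad_count t' (isT : uniq [:: v])).
rewrite (leq_trans (leq_add e1 e2)) // -addnA leq_add2l.
rewrite expnD; set X := n ^ t'; set Y := n ^ (j * t'.+1); nia.
Qed.

Lemma N3 (V : finType) (EH : {set {set V}}) (v : V) t' j :
  \sum_(U <- allseqs V t') \sum_(s <- allseqs V j) Wa (ee EH) (v :: U) s
  = \sum_(s <- allseqs V j) ee EH (v :: s) * (\sum_x ee EH (x :: s)) ^ t'.
Proof.
rewrite exchange_big /=; apply: eq_bigr => s _.
rewrite -sum_prod_allseqs big_distrr /=; apply: eq_bigr => U _.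
by rewrite /Wa big_cons.
Qed.

Lemma Dsplit (V : finType) (EH : {set {set V}}) (v : V) j' :
  \sum_(s <- allseqs V j'.+1) ee EH (v :: s)
  = \sum_(s <- allseqs V j') \sum_x ee EH (x :: v :: s).
Proof.
rewrite sum_allseqsS exchange_big /=; apply: eq_bigr => s _; apply: eq_bigr => x _.
by rewrite /ee (_ : [set y in v :: x :: s] = [set y in x :: v :: s]) //; apply/setP => y; rewrite !inE orbCA.
Qed.

Lemma Gd_bound (V : finType) (v : V) j' :
  2 * (j' * (1 + j')) <= #|V| ->
  #|V| ^ j' <= 2 * \sum_(s <- allseqs V j') (uniq (v :: s) : nat).
Proof.
move=> hn.
have hb := bad_count j' (isT : uniq [:: v]).
have hs : \sum_(s <- allseqs V j') (uniq (v :: s) : nat)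
   + \sum_(s <- allseqs V j') (~~ uniq ([:: v] ++ s) : nat) = #|V| ^ j'.
  rewrite -big_split /= -(size_allseqs V j') -sum1_size; apply: eq_bigr => s _.
  by case: (_ && _).
move: hb hs; rewrite [size [:: v]]/=.
set G := \sum_(s <- allseqs V j') (uniq (v :: s) : nat).
set Bd := \sum_(s <- allseqs V j') (~~ uniq ([:: v] ++ s) : nat).
set N := #|V| ^ j'; set n := #|V|; set g := j' * (1 + j') => hb hs.
have : 2 * Bd * n <= N * n.
  rewrite -mulnA (leq_trans (leq_mul (leqnn 2) hb)) // mulnA mulnC leq_mul //.
have n0 : 0 < n by apply/card_gt0P; exists v.
rewrite leq_pmul2r // => h; lia.
Qed.

Lemma codeg_real (R : realType) (V : finType) (EH : {set {set V}}) j (a : R) (s : seq V) :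
  is_kgraph j.+1 EH -> codeg_ge j.+1 EH a -> uniq s -> size s = j ->
  (a * #|V|%:R <= (\sum_x ee EH (x :: s))%:R)%R.
Proof.
move=> Hk Hc us ss.
have cS : #|[set y in s]| = j by rewrite cardsE (card_uniqP us) ss.
apply: (le_trans (Hc _ cS)); rewrite ler_nat; exact: (codeg_nat Hk us ss).
Qed.

Lemma uniq_of_edge (V : finType) (EH : {set {set V}}) j (s : seq V) :
  is_kgraph j EH -> size s = j -> 0 < ee EH s -> uniq s.
Proof.
move=> Hk ss; rewrite /ee lt0b => /Hk; rewrite cardsE => cs.
by apply/card_uniqP; rewrite cs ss.
Qed.

Local Open Scope ring_scope.

Theorem mainTheorem12 (R : realType) (k : nat) (hk : (2 <= k)%N)
    (W : finType) (EF : {set {set W}}) :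
  is_kgraph k EF -> kpartite k EF -> in_COVER R k EF.
Proof.
move=> HkF [c [csurj cedge]] p a /andP[p0 p1] /andP[a0 a1].
case: k hk HkF c csurj cedge => [|[|j']] // _ HkF c csurj cedge.
have [w0 cw0] := csurj ord0.
have tpos : (0 < #|W|)%N by apply/card_gt0P; exists w0.
pose t' := #|W|.-1.
have tE : #|W| = t'.+1 by rewrite prednK.
pose j := j'.+1.
pose m := (t'.+1 ^ j)%N.
pose g1 := (j' * (1 + j'))%N.
pose C := (Kf t'.+1 j t'.+1 + t' * (1 + t'))%N.
pose Y : R := a ^+ t'.+1 / 2.
have Ypos : 0 < Y by rewrite /Y divr_gt0 // exprn_gt0.
pose N1 := Num.Def.archi_bound (C%:R / Y ^+ m : R).
have HN1 : C%:R / Y ^+ m < N1%:R :> R.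
  by apply: archi_boundP; rewrite divr_ge0 // ?ler0n // exprn_ge0 // ltW.
exists (2 * g1 + N1 + 1)%N; exists 1 => //.
move=> V EH HkH _ Hcod Hn v.
pose n := #|V|.
have npos : (0 < n)%N by apply/card_gt0P; exists v.
pose e := ee EH.
pose SX := (\sum_(U <- allseqs V t') \sum_(s <- allseqs V j) Wa e (v :: U) s)%N.
pose T := (\sum_(U <- allseqs V t') homP t'.+1 j (Wa e (v :: U)))%N.
pose G := (\sum_(U <- allseqs V t' | uniq (v :: U)) homPB t'.+1 j (v :: U) (Wa e (v :: U)))%N.
pose Gd := (\sum_(s <- allseqs V j') (uniq (v :: s) : nat))%N.
pose D := (\sum_(s <- allseqs V j) e (v :: s))%N.
pose nR : R := n%:R.
have nRpos : 0 < nR by rewrite ltr0n.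
have anpos : 0 <= a * nR by rewrite mulr_ge0 // ltW.
have stA : a * nR * Gd%:R <= D%:R.
  rewrite /D Dsplit natr_sum /Gd natr_sum mulr_sumr.
  rewrite big_seq [X in _ <= X]big_seq; apply: ler_sum => s Hs.
  case u: (uniq (v :: s)); last by rewrite mulr0 ler0n.
  rewrite mulr1; apply: (codeg_real HkH Hcod u); by rewrite /= (mem_allseqs Hs).
have stB : (a * nR) ^+ t' * D%:R <= SX%:R.
  rewrite /SX N3 natr_sum /D natr_sum mulr_sumr big_seq [X in _ <= X]big_seq.
  apply: ler_sum => s Hs.
  have := ee_le1 EH (v :: s); rewrite -/e.
  case ev: (e (v :: s)) => [|[|]] // _.
    by rewrite mul0n mulr0.
  rewrite mul1n mulr1 natrX; apply: lerXn2r; rewrite ?nnegrE ?ler0n //.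
  have us : uniq (v :: s).
    by apply: (uniq_of_edge HkH); rewrite /= ?(mem_allseqs Hs) // -/e ev.
  by apply: (codeg_real HkH Hcod); [case/andP: us|rewrite (mem_allseqs Hs)].
have stC : (n ^ j' <= 2 * Gd)%N by apply: Gd_bound; rewrite (leq_trans _ Hn) // -addnA leq_addr.
have stD : Y * nR ^+ (t' + j) <= SX%:R.
  apply: le_trans stB; apply: (le_trans _ (ler_wpM2l (exprn_ge0 _ anpos) stA)).
  have E : Y * nR ^+ (t' + j) = (a * nR) ^+ t' * (a * nR * (nR ^+ j' / 2)).
    rewrite /Y exprMn exprD /j exprS !exprS; by field.
  rewrite E; apply: ler_wpM2l; first exact: exprn_ge0.
  apply: ler_wpM2l => //; rewrite ler_pdivrMr // mulrC.
  by move: stC; rewrite -(ler_nat R) natrX natrM.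
have stE : Y ^+ m * nR ^+ (t' + j * t'.+1) <= T%:R.
  have h := @N1lem V EH v t' j npos.
  move: h; rewrite -(ler_nat R) !natrM !natrX -/m -/nR -/SX -/T => h.
  have Qpos : 0 < nR ^+ (t' * m) * nR ^+ (j * m) by rewrite mulr_gt0 // exprn_gt0.
  rewrite -(ler_pM2r Qpos).
  have E : Y ^+ m * nR ^+ (t' + j * t'.+1) * (nR ^+ (t' * m) * nR ^+ (j * m))
      = (Y * nR ^+ (t' + j)) ^+ m * nR ^+ t' * nR ^+ (j * t'.+1).
    by rewrite [in RHS]exprMn -[in RHS]exprM mulnDl !exprD; ring.
  rewrite E [T%:R * _]mulrC; apply: (le_trans _ h); rewrite ler_wpM2r ?exprn_ge0 ?ler0n //.
  rewrite ler_wpM2r ?exprn_ge0 ?ler0n //; apply: lerXn2r; rewrite ?nnegrE //.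
  by rewrite mulr_ge0 ?exprn_ge0 // ltW.
have Gpos : (0 < G)%N.
  rewrite lt0n; apply/negP => /eqP G0.
  have h := @N2lem V EH v t' j.
  move: h; rewrite -/e -/T -/G G0 mul0n add0n -(ler_nat R) !natrM natrX -/nR -/C => h.
  have h2 : Y ^+ m * nR * nR ^+ (t' + j * t'.+1) <= C%:R * nR ^+ (t' + j * t'.+1).
    by rewrite mulrAC (le_trans _ h) // ler_wpM2r // ltW.
  rewrite ler_pM2r ?exprn_gt0 // in h2.
  have h3 : nR <= C%:R / Y ^+ m by rewrite ler_pdivlMr ?exprn_gt0 // mulrC.
  have h4 : N1%:R <= nR :> R by rewrite ler_nat (leq_trans _ Hn) // addn1 leqW // leq_addl.
  by have := lt_le_trans (le_lt_trans h3 HN1) h4; rewrite ltxx.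
have [U [HU uU HP]] := sum_gt0_ex Gpos.
have [ps [sps aps ups okps]] := extract uU HP.
apply: (@build W V j EF EH c w0 v ((v :: U) :: ps)) => //.
- by rewrite /= sps.
- by rewrite /= tE (mem_allseqs HU) eqxx aps.
- move=> xs Txs; have := @okW_transv V ((v :: U) :: ps) e xs okps Txs.
  by rewrite /e /ee lt0b.
Qed.
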